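(* Let $K$ be a number field, let $\mathcal{P}$ be the set of nonzero prime ideals of $K$, and let $\mathrm{N}=\mathrm{N}_{K/\mathbb{Q}}$ denote the absolute norm. Let $\mathcal{A}\subseteq\mathcal{P}$ be a subset such that there exist constants $\delta\geq 0$ and $C\in\mathbb{R}$ (depending at most on $\mathcal{A}$) with \[ \sum_{\substack{\mathfrak{p}\in\mathcal{A}\\ \mathrm{N}\mathfrak{p}\leq x}}\frac{1}{\mathrm{N}\mathfrak{p}}=\delta\log\log x+C+o\Big(\frac{1}{\log x}\Big)\qquad (x\to\infty). \] Let $b\geq 2$ be an integer, let $m\geq 1$, and let $S$ be a string of $m$ base-$b$ digits $a_1a_2\cdots a_m$ with $a_1\neq 0$; we also write $S$ for the positive integer $\sum_{i=1}^m a_i b^{m-i}$ whose base-$b$ expansion is this string. Let $\mathcal{A}_{b,S}$ be the set of $\mathfrak{p}\in\mathcal{A}$ such that the base-$b$ expansion of $\mathrm{N}\mathfrak{p}$ begins with the string $S$. Then the logarithmic density of $\mathcal{A}_{b,S}$ exists and \[ d(\mathcal{A}_{b,S})=\delta\log_b\big(1+S^{-1}\big). \]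
   Context: For a set $\mathcal{B}$ of prime ideals of $K$, define \[ \overline{d(\mathcal{B})}=\limsup_{x\to\infty}\frac{1}{\log\log x}\sum_{\substack{\mathfrak{p}\in\mathcal{B}\\ \mathrm{N}\mathfrak{p}\leq x}}\frac{1}{\mathrm{N}\mathfrak{p}},\qquad \underline{d(\mathcal{B})}=\liminf_{x\to\infty}\frac{1}{\log\log x}\sum_{\substack{\mathfrak{p}\in\mathcal{B}\\ \mathrm{N}\mathfrak{p}\leq x}}\frac{1}{\mathrm{N}\mathfrak{p}}. \] If these are equal, their common value is the logarithmic density $d(\mathcal{B})$ of $\mathcal{B}$. *)

(* Defs.v *)
From HB Require Import structures.
From mathcomp Require Import all_boot all_order all_algebra all_field.
From mathcomp Require Import all_classical all_reals all_analysis.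
Set Implicit Arguments.
Unset Strict Implicit.
Unset Printing Implicit Defensive.
Import Order.TTheory GRing.Theory Num.Theory.
Import numFieldNormedType.Exports.
Local Open Scope classical_set_scope.
Local Open Scope ring_scope.

(** A number field is a finite-dimensional field extension [K : fieldExtType rat]. *)

Definition integral (K : fieldExtType rat) (x : K) : Prop :=
  exists p : {poly int}, p \is monic /\ root (map_poly (fun z : int => (z%:~R : K)) p) x.

Definition OK (K : fieldExtType rat) : set K := [set x | integral x].
Arguments OK K : clear implicits.

Definition is_ideal (K : fieldExtType rat) (I : set K) : Prop :=
  [/\ I `<=` OK K, I 0,
      (forall x y, I x -> I y -> I (x + y)) &
      (forall a x, OK K a -> I x -> I (a * x))].

Definition is_nonzero_prime (K : fieldExtType rat) (I : set K) : Prop :=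
  [/\ is_ideal I, I <> [set 0], I <> OK K &
      (forall x y, OK K x -> OK K y -> I (x * y) -> I x \/ I y)].

Definition primes_of (K : fieldExtType rat) : set (set K) :=
  [set I | is_nonzero_prime I].
Arguments primes_of K : clear implicits.

(** [n] is the cardinality of O_K / I: there is a complete system of
    n pairwise incongruent representatives. *)
Definition quotient_card_is (K : fieldExtType rat) (I : set K) (n : nat) : Prop :=
  exists r : 'I_n -> K,
    [/\ (forall i, OK K (r i)),
        (forall i j, I (r i - r j) -> i = j) &
        (forall x, OK K x -> exists i, I (x - r i))].

(** Absolute norm N I = #(O_K / I) (0 by convention if no finite such n exists,
    which never happens for nonzero ideals). *)
Definition absnorm (K : fieldExtType rat) (I : set K) : nat :=
  xget 0%N [set n | quotient_card_is I n].

Definition recip_norm_sum (R : realType) (K : fieldExtType rat)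
    (B : set (set K)) (x : R) : \bar R :=
  \esum_(p in [set p | B p /\ ((absnorm p)%:R <= x)]) ((absnorm p)%:R^-1)%:E.

Definition upper_logdens (R : realType) (K : fieldExtType rat) (B : set (set K)) : \bar R :=
  limf_esup (fun x : R => (recip_norm_sum B x * ((ln (ln x))^-1)%:E)%E) (+oo : set_system R).
Definition lower_logdens (R : realType) (K : fieldExtType rat) (B : set (set K)) : \bar R :=
  limf_einf (fun x : R => (recip_norm_sum B x * ((ln (ln x))^-1)%:E)%E) (+oo : set_system R).

Arguments upper_logdens R {K} B.
Arguments lower_logdens R {K} B.

Definition has_logdensity (R : realType) (K : fieldExtType rat) (B : set (set K)) (d : R) : Prop :=
  upper_logdens R B = d%:E /\ lower_logdens R B = d%:E.

(** Base-b digits, most significant first (for b >= 2; digits b 0 = [::]). *)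
Fixpoint rdigits_aux (b fuel n : nat) : seq nat :=
  if fuel is f.+1 then
    (if n == 0%N then [::] else (n %% b)%N :: rdigits_aux b f (n %/ b))
  else [::].
Definition digits (b n : nat) : seq nat := rev (rdigits_aux b n n).

Definition digits_value (b : nat) (s : seq nat) : nat :=
  (\sum_(i < size s) nth 0%N s i * b ^ (size s - i.+1))%N.

Definition leading_digits_set (K : fieldExtType rat) (A : set (set K)) (b : nat) (s : seq nat)
  : set (set K) := [set p | A p /\ prefix s (digits b (absnorm p))].

(* Main.v *)
Require Import Defs.
From HB Require Import structures.
From mathcomp Require Import all_boot all_order all_algebra all_field.
From mathcomp Require Import all_classical all_reals all_analysis.
From mathcomp Require Import ring lra zify.
Import Order.TTheory GRing.Theory Num.Theory.
Import numFieldNormedType.Exports.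
Local Open Scope classical_set_scope.
Local Open Scope ring_scope.
Lemma esup_cvg (R : realType) (h : R -> \bar R) (f : R -> R) (d : R) :
  (\forall x \near +oo, h x = (f x)%:E) -> f x @[x --> +oo] --> d ->
  limf_esup h (+oo : set_system R) = d%:E.
Proof.
move=> hf fd.
have W e : 0 < e -> \forall x \near +oo, h x = (f x)%:E /\ `|d - f x| <= e.
  move=> e0; move/cvgrPdist_le: fd => /(_ e e0) fd.
  by near=> x; split; near: x.
apply/eqP; rewrite eq_le; apply/andP; split.
- apply/lee_addgt0Pr => e e0.
  apply: (@le_trans _ _ (ereal_sup (h @` [set x | h x = (f x)%:E /\ `|d - f x| <= e]))).
    by apply: ereal_inf_lbound; exists [set x | h x = (f x)%:E /\ `|d - f x| <= e] => //; exact: W.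
  apply: ge_ereal_sup => _ [x [-> Hx] <-]; rewrite lee_fin.
  by move: Hx; rewrite ler_norml => /andP[H1 H2]; lra.
- apply/lee_addgt0Pr => e e0.
  rewrite -leeBlDr //.
  apply: le_ereal_inf_tmp => _ [V FV <-].
  have [y [Vy [hy Hy]]] : exists y, V y /\ (h y = (f y)%:E /\ `|d - f y| <= e).
    by apply: (@filter_ex _ (+oo : set_system R) proper_pinfty_nbhs); apply: filterI FV (W e e0).
  apply: (@le_trans _ _ (h y)); last by apply: ereal_sup_ubound; exists y.
  rewrite hy -EFinB lee_fin.
  by move: Hy; rewrite ler_norml => /andP[H1 H2]; lra.
Unshelve. all: by end_near.
Qed.

Lemma einf_cvg (R : realType) (h : R -> \bar R) (f : R -> R) (d : R) :
  (\forall x \near +oo, h x = (f x)%:E) -> f x @[x --> +oo] --> d ->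
  limf_einf h (+oo : set_system R) = d%:E.
Proof.
move=> hf fd; rewrite /limf_einf (@esup_cvg _ _ (fun x => - f x) (- d)).
- by rewrite EFinN oppeK.
- by near=> x; rewrite /= EFinN; congr (- _)%E; near: x.
- exact: cvgN.
Unshelve. all: by end_near.
Qed.

Definition aB (R : realType) (K : fieldExtType rat) (B : set (set K)) (n : nat) : \bar R :=
  \esum_(p in [set p | B p /\ absnorm p = n]) ((absnorm p)%:R^-1)%:E.
Arguments aB R {K} B n.

Lemma rns_decomp (R : realType) (K : fieldExtType rat) (B : set (set K)) (x : R) :
  0 <= x -> recip_norm_sum B x = \sum_(n < (Num.trunc x).+1) aB R B n.
Proof.
move=> x0; rewrite /recip_norm_sum.
have /andP[HN1 HN2] := truncn_itv x0.
set N := Num.trunc x in HN1 HN2 *.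
have -> : [set p | B p /\ (absnorm p)%:R <= x] =
    \bigcup_(n in `I_N.+1) [set p | B p /\ absnorm p = n].
  apply/seteqP; split => p /=.
  - move=> [Bp le]; exists (absnorm p) => //=.
    by rewrite -(ltr_nat R); apply: le_lt_trans HN2.
  - move=> [n /= ltn [Bp ->]]; split => //.
    by apply: le_trans HN1; rewrite ler_nat -ltnS.
rewrite esum_bigcupT.
- rewrite esum_fset; first by rewrite -fsbig_ord.
  + exact: finite_II.
  + by move=> i _; apply: esum_ge0 => p _; rewrite lee_fin invr_ge0 ler0n.
- by move=> i j _ _ [p [[_ <-] [_ <-]]].
- by move=> p; rewrite lee_fin invr_ge0 ler0n.
Qed.

Lemma aB_lead (R : realType) (K : fieldExtType rat) (A : set (set K)) b s n :
  aB R (leading_digits_set A b s) n =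
  if prefix s (digits b n) then aB R A n else 0%E.
Proof.
rewrite /aB /leading_digits_set; case: ifP => H.
- congr esum; apply/seteqP; split => p /=.
  + by move=> [[Ap _] En].
  + by move=> [Ap En]; split => //; split => //; rewrite En.
- rewrite -(esum_set0 (fun p : set K => ((absnorm p)%:R^-1)%:E)); congr esum.
  apply/seteqP; split => p //= [[Ap Hp] En]; by rewrite En H in Hp.
Qed.


Lemma rdigits_fuel b f1 f2 m : (2 <= b)%N -> (m <= f1)%N -> (m <= f2)%N ->
  rdigits_aux b f1 m = rdigits_aux b f2 m.
Proof.
move=> b2; elim: f1 f2 m => [|f1 IH] [|f2] m /=.
- by [].
- by rewrite leqn0 => /eqP -> _; rewrite eqxx.
- by move=> _; rewrite leqn0 => /eqP ->; rewrite eqxx.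
- move=> h1 h2; case: eqP => // /eqP m0; congr (_ :: _); apply: IH.
  + have : (m %/ b < m)%N by rewrite ltn_Pdiv // lt0n.
    lia.
  + have : (m %/ b < m)%N by rewrite ltn_Pdiv // lt0n.
    lia.
Qed.

Lemma digits0 b : digits b 0 = [::].
Proof. by []. Qed.

Lemma digitsS b n : (2 <= b)%N -> (0 < n)%N ->
  digits b n = rcons (digits b (n %/ b)%N) (n %% b)%N.
Proof.
move=> b2; case: n => [//|f] _.
rewrite /digits /= rev_cons; congr rcons.
congr rev; apply: rdigits_fuel => //.
have : (f.+1 %/ b < f.+1)%N by rewrite ltn_Pdiv.
lia.
Qed.

Lemma value_rcons b t x :
  digits_value b (rcons t x) = (digits_value b t * b + x)%N.
Proof.
rewrite /digits_value size_rcons big_ord_recr /= nth_rcons ltnn eqxx subnn expn0 muln1.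
congr (_ + _)%N; rewrite big_distrl /=; apply: eq_bigr => i _.
rewrite nth_rcons (ltn_ord i) -mulnA -expnSr; congr (_ * b ^ _)%N.
have := ltn_ord i; lia.
Qed.

Lemma value_digits b n : (2 <= b)%N -> digits_value b (digits b n) = n.
Proof.
move=> b2; elim/ltn_ind: n => n IH.
case: (posnP n) => [->|n0]; first by rewrite digits0 /digits_value big_ord0.
rewrite digitsS // value_rcons IH; first by rewrite -divn_eq.
by rewrite ltn_Pdiv.
Qed.

Lemma digits_value_valid b s : (2 <= b)%N -> s != [::] -> all (fun a => a < b)%N s ->
  nth 0%N s 0 != 0%N -> digits b (digits_value b s) = s.
Proof.
move=> b2; elim/last_ind: s => [//|t x IH] _.
rewrite all_rcons => /andP[xb tb].
case: (eqVneq t [::]) => [->|tn] /=.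
- move=> x0; rewrite (value_rcons b [::] x) /digits_value big_ord0 mul0n add0n.
  by rewrite digitsS ?lt0n // divn_small // modn_small.
- rewrite nth_rcons; case: t tn IH tb => [//|y t'] _ IH tb /= y0.
  have IH' := IH isT tb y0.
  have v0 : (0 < digits_value b (y :: t'))%N.
    by rewrite lt0n; apply/eqP => E; rewrite E digits0 in IH'.
  rewrite -[y :: rcons t' x]/(rcons (y :: t') x).
  rewrite value_rcons digitsS //; last by nia.
  rewrite divnMDl ?(leq_trans _ b2) // divn_small // addn0 IH'.
  by rewrite modnMDl modn_small.
Qed.

Lemma prefix_interval b s n : (2 <= b)%N -> s != [::] -> prefix s (digits b n) ->
  exists k, (digits_value b s * b ^ k <= n < (digits_value b s).+1 * b ^ k)%N.
Proof.
move=> b2 sn /prefixP [u]; elim/last_ind: u n => [|u y IH] n E.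
- rewrite cats0 in E; exists 0%N; rewrite expn0 !muln1 -E value_digits //; lia.
- rewrite -rcons_cat in E.
  have n0 : (0 < n)%N.
    by rewrite lt0n; apply/eqP => n0; rewrite n0 digits0 in E; case: (s ++ u) E.
  rewrite digitsS // in E; move/eqP: E; rewrite eqseq_rcons => /andP[/eqP E _].
  have [k /andP[H1 H2]] := IH _ E.
  exists k.+1; rewrite expnSr.
  have := divn_eq n b; have := ltn_pmod n (ltnW b2).
  set q := (n %/ b)%N in H1 H2 *; set r := (n %% b)%N.
  move=> hr hn; apply/andP; split; nia.
Qed.

Lemma interval_prefix b s n k : (2 <= b)%N -> s != [::] -> all (fun a => a < b)%N s ->
  nth 0%N s 0 != 0%N ->
  (digits_value b s * b ^ k <= n < (digits_value b s).+1 * b ^ k)%N ->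
  prefix s (digits b n).
Proof.
move=> b2 sn sb s0; have Hs := @digits_value_valid b s b2 sn sb s0.
have S0 : (0 < digits_value b s)%N.
  by rewrite lt0n; apply/eqP => E; rewrite E digits0 in Hs; rewrite -Hs in sn.
elim: k n => [|k IH] n.
- rewrite expn0 !muln1 => H; have -> : n = digits_value b s by lia.
  by rewrite Hs prefix_refl.
- rewrite expnSr => /andP[H1 H2].
  have n0 : (0 < n)%N by have := expn_gt0 b k; nia.
  rewrite digitsS //.
  have : prefix s (digits b (n %/ b)%N).
    apply: IH; apply/andP; split.
    + by rewrite leq_divRL ?(ltnW b2) // -mulnA.
    + by rewrite ltn_divLR ?(ltnW b2) // -mulnA.
  by move/prefixP => [u ->]; rewrite rcons_cat; apply/prefixP; exists (rcons u (n %% b)%N).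
Qed.

Lemma value_pos b s : (2 <= b)%N -> s != [::] -> all (fun a => a < b)%N s ->
  nth 0%N s 0 != 0%N -> (0 < digits_value b s)%N.
Proof.
move=> b2 sn sb s0; have Hs := @digits_value_valid b s b2 sn sb s0.
by rewrite lt0n; apply/eqP => E; rewrite E digits0 in Hs; rewrite -Hs in sn.
Qed.

Lemma prefix_window b s n K : (2 <= b)%N -> s != [::] -> all (fun a => a < b)%N s ->
  nth 0%N s 0 != 0%N ->
  (digits_value b s * b ^ K <= n < digits_value b s * b ^ K.+1)%N ->
  prefix s (digits b n) = (n < (digits_value b s).+1 * b ^ K)%N.
Proof.
move=> b2 sn sb s0 /andP[w1 w2]; have S0 := @value_pos b s b2 sn sb s0.
apply/idP/idP.
- move/(@prefix_interval b s n b2 sn) => [k /andP[h1 h2]].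
  case: (ltngtP k K) => [kK|Kk|kK]; last by rewrite -kK.
  + have : (b ^ k.+1 <= b ^ K)%N by rewrite leq_pexp2l // ltnW.
    rewrite expnSr => hp; exfalso; nia.
  + have : (b ^ K.+1 <= b ^ k)%N by rewrite leq_pexp2l // ltnW.
    move=> hp; exfalso; nia.
- by move=> h; apply: (@interval_prefix b s n K) => //; rewrite w1.
Qed.

Lemma ln_lnS (R : realType) (k : nat) : (0 < k)%N ->
  k%:R * (ln (k.+1%:R) - ln k%:R) <= 1 :> R.
Proof.
move=> k0; have kp : 0 < k%:R :> R by rewrite ltr0n.
rewrite -ln_div ?posrE ?ltr0n //.
have -> : k.+1%:R / k%:R = 1 + k%:R^-1 :> R.
  by rewrite -natr1 mulrDl divff ?gt_eqF // mul1r addrC.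
have ki : 0 < k%:R^-1 :> R by rewrite invr_gt0.
have h : ln (1 + k%:R^-1) <= k%:R^-1 :> R by apply: le_ln1Dx; lra.
by rewrite -[X in _ <= X](@mulfV _ k%:R) ?gt_eqF // ler_pM2l.
Qed.

Lemma ln_lnP (R : realType) (k : nat) : (1 < k)%N ->
  1 <= k%:R * (ln k%:R - ln (k.-1)%:R) :> R.
Proof.
move=> k1; have kp : 0 < k%:R :> R by rewrite ltr0n ltnW.
have k1p : 0 < (k.-1)%:R :> R by rewrite ltr0n -ltnS prednK // ltnW.
have ki : 0 < k%:R^-1 :> R by rewrite invr_gt0.
have ki1 : k%:R^-1 < 1 :> R by rewrite invf_lt1 // ltr1n.
have E : (k.-1)%:R / k%:R = 1 + - k%:R^-1 :> R.
  have hk : k%:R = (k.-1)%:R + 1 :> R by rewrite natr1 prednK // ltnW.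
  rewrite hk; field; rewrite -hk gt_eqF //.
have h : ln (1 + - k%:R^-1) <= - k%:R^-1 :> R by apply: le_ln1Dx; lra.
rewrite -E ln_div ?posrE // in h.
have : k%:R^-1 <= ln k%:R - ln (k.-1)%:R :> R by lra.
by move=> H; rewrite -[X in X <= _](@mulfV _ k%:R) ?gt_eqF // ler_pM2l.
Qed.

Lemma ln_large (R : realType) (M : R) : \forall K \near \oo, M <= ln (K%:R : R).
Proof.
near=> K.
have hK : expR M < K%:R by near: K; exact: nbhs_infty_gtr.
rewrite -{1}(expRK M) ler_ln ?posrE ?expR_gt0 //; [exact: ltW | exact: lt_trans (expR_gt0 M) hK].
Unshelve. all: by end_near.
Qed.

Lemma stolz (R : realType) (t c : nat -> R) (L : R) : 0 <= L ->
  (forall K, t K.+1 = t K + c K) -> (forall K, 0 <= c K) ->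
  (fun k => k%:R * c k) @ \oo --> L ->
  (fun K => t K / ln (K%:R : R)) @ \oo --> L.
Proof.
move=> L0 tS c0 hc; apply/cvgrPdist_le => e e0.
have e'0 : 0 < e / 2 by rewrite divr_gt0.
set e' := e / 2 in e'0.
move/cvgrPdist_le: hc => /(_ e' e'0) [k0 _ Hk0].
set k1 := (k0 + 2)%N.
have hk k : (k1 <= k)%N -> L - e' <= k%:R * c k <= L + e'.
  move=> kk; move: (Hk0 k (leq_trans (leq_addr 2 k0) kk)).
  by rewrite /= ler_norml => /andP[h1 h2]; apply/andP; split; lra.
have low d : t k1 + (L - e') * (ln (k1 + d)%N%:R - ln k1%:R) <= t (k1 + d)%N.
  elim: d => [|d IH]; first by rewrite !addn0 subrr mulr0 addr0.
  rewrite addnS tS.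
  have /andP[h1 _] := hk (k1 + d)%N (leq_addr _ _).
  have h3 := @ln_lnS R (k1 + d)%N (leq_trans (isT : (0 < 2)%N) (leq_trans (leq_addl _ _) (leq_addr _ _))).
  have h4 : ln (k1 + d)%N%:R <= ln (k1 + d)%N.+1%:R :> R.
    have hp : (0 < k1 + d)%N by rewrite /k1; lia.
    by rewrite ler_ln ?posrE ?ltr0n // ler_nat.
  have h5 := c0 (k1 + d)%N.
  have h6 : 0 <= (k1 + d)%N%:R :> R by [].
  nra.
have upp d : t (k1 + d)%N <= t k1 + (L + e') * (ln (k1 + d)%N.-1%:R - ln k1.-1%:R).
  elim: d => [|d IH]; first by rewrite !addn0 subrr mulr0 addr0.
  rewrite addnS tS /=.
  have /andP[_ h2] := hk (k1 + d)%N (leq_addr _ _).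
  have h3 := @ln_lnP R (k1 + d)%N (leq_trans (isT : (1 < 2)%N) (leq_trans (leq_addl _ _) (leq_addr _ _))).
  have h4 : ln (k1 + d)%N.-1%:R <= ln (k1 + d)%N%:R :> R.
    have hp : (0 < (k1 + d).-1)%N by rewrite /k1; lia.
    have hp' : (0 < (k1 + d))%N by rewrite /k1; lia.
    by rewrite ler_ln ?posrE ?ltr0n // ler_nat leq_pred.
  have h5 := c0 (k1 + d)%N.
  have h6 : 0 <= (k1 + d)%N%:R :> R by [].
  nra.
set A1 := t k1 - (L - e') * ln k1%:R.
set A2 := t k1 - (L + e') * ln k1.-1%:R.
near=> K.
have Kk : (k1 <= K)%N by near: K; exact: nbhs_infty_ge.
have lK : (`|A1| + `|A2|) / e' + 1 <= ln (K%:R : R) by near: K; exact: ln_large.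
have lK0 : 0 < ln (K%:R : R).
  apply: lt_le_trans lK; apply: ltr_pwDr => //.
  by apply: divr_ge0; [apply: addr_ge0 | exact: ltW].
have eK : `|A1| + `|A2| + e' <= e' * ln (K%:R : R).
  have := lK; rewrite -(ler_pM2l e'0) mulrDr mulr1 mulrCA divff ?gt_eqF // mulr1.
  by [].
have hlo := low (K - k1)%N; have hup := upp (K - k1)%N.
rewrite subnKC // in hlo hup.
have hK2 : ln K.-1%:R <= ln (K%:R : R).
  have hp : (0 < K.-1)%N by rewrite /k1 in Kk; lia.
  have hp' : (0 < K)%N by rewrite /k1 in Kk; lia.
  by rewrite ler_ln ?posrE ?ltr0n // ler_nat leq_pred.
have he : e = e' + e' by rewrite /e'; field.
have a1 := ler_norm A1; have a1' := ler_normr A1.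
have a2 := ler_norm A2.
have hA1 : - `|A1| <= A1.
  by rewrite lerNl; have := ler_norm (- A1); rewrite normrN.
have hA2 : A2 <= `|A2| by [].
set lk := ln (K%:R : R) in lK0 eK hK2 hlo hup *.
have dA1 : A1 = t k1 - (L - e') * ln k1%:R by [].
have dA2 : A2 = t k1 - (L + e') * ln k1.-1%:R by [].
clearbody A1 A2.
set x := t K in hlo hup *.
have xq : x = (x / lk) * lk by rewrite divfK ?gt_eqF.
set q := x / lk in xq *.
rewrite ler_norml; apply/andP; split.
- have : q * lk <= (L + e) * lk.
    rewrite -xq.
    have ha : 0 <= `|A1| by [].
    have hp : (L + e') * ln K.-1%:R <= (L + e') * lk by rewrite ler_wpM2l //; lra.
    nra.
  by rewrite ler_pM2r // => h; lra.
- have : (L - e) * lk <= q * lk.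
    rewrite -xq.
    have ha : 0 <= `|A2| by [].
    nra.
  by rewrite ler_pM2r // => h; lra.
Unshelve. all: by end_near.
Qed.



Lemma invn_cvg0 (R : realType) : (fun K : nat => (K%:R : R)^-1) @ \oo --> 0.
Proof.
apply/gtr0_cvgV0; last exact: cvgr_idn.
by near=> K; rewrite ltr0n; near: K; exact: nbhs_infty_gt.
Unshelve. all: by end_near.
Qed.

Lemma invln_cvg0 (R : realType) : (fun K : nat => (ln (K%:R : R))^-1) @ \oo --> 0.
Proof.
apply/gtr0_cvgV0.
  near=> K; apply: (@lt_le_trans _ _ 1) => //; near: K; exact: ln_large.
by apply/cvgryPge => A; exact: ln_large.
Unshelve. all: by end_near.
Qed.

Lemma RL0 (R : realType) (a b : R) : 0 < a ->
  (fun K : nat => ln (a * K%:R + b) / ln (K%:R : R)) @ \oo --> (1 : R).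
Proof.
move=> a0.
have h1 : (fun K : nat => a + b * (K%:R : R)^-1) @ \oo --> a.
  rewrite -[X in _ --> X]addr0; apply: cvgD; first exact: cvg_cst.
  by rewrite -(mulr0 b); apply: cvgMr; exact: invn_cvg0.
have h2 : (fun K : nat => ln (a + b * (K%:R : R)^-1)) @ \oo --> ln a.
  exact: (cvg_comp _ _ h1 (continuous_ln a0)).
have h3 : (fun K : nat => 1 + ln (a + b * (K%:R : R)^-1) * (ln (K%:R : R))^-1) @ \oo --> (1 : R).
  rewrite -[X in _ --> X]addr0 -(mulr0 (ln a)); apply: cvgD; first exact: cvg_cst.
  exact: cvgM h2 (invln_cvg0 R).
apply: cvg_trans h3; apply: near_eq_cvg; near=> K.
have hp : 0 < a + b * (K%:R : R)^-1.
  by near: K; move/cvgr_gt: h1 => /(_ 0 a0).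
have hK : 1 <= ln (K%:R : R) by near: K; exact: ln_large.
have K0 : 0 < (K%:R : R).
  by rewrite ltr0n; near: K; exact: nbhs_infty_gt.
have -> : a * K%:R + b = K%:R * (a + b * (K%:R : R)^-1).
  by rewrite mulrDr mulrCA divff ?gt_eqF // mulr1 mulrC.
rewrite lnM ?posrE // mulrDl divff // gt_eqF //; exact: lt_le_trans hK.
Unshelve. all: by end_near.
Qed.

Lemma RL (R : realType) (a1 b1 a2 b2 : R) : 0 < a1 -> 0 < a2 ->
  (fun K : nat => ln (a1 * K%:R + b1) / ln (a2 * K%:R + b2)) @ \oo --> (1 : R).
Proof.
move=> a10 a20.
have h : (fun K : nat => (ln (a1 * K%:R + b1) / ln (K%:R : R)) *
   (ln (a2 * K%:R + b2) / ln (K%:R : R))^-1) @ \oo --> (1 * 1^-1 : R).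
  by apply: cvgM; [exact: RL0 | apply: cvgV => //; exact: RL0].
rewrite invr1 mulr1 in h.
move: h; apply: cvg_trans; apply: near_eq_cvg; near=> K.
have hK : 1 <= ln (K%:R : R) by near: K; exact: ln_large.
rewrite /= invf_div mulrA divfK // gt_eqF //; exact: lt_le_trans hK.
Unshelve. all: by end_near.
Qed.

Lemma ln_large_x (R : realType) (M : R) : \forall x \near +oo, M < ln x.
Proof.
near=> x.
have hx : expR M < x by near: x; apply: nbhs_pinfty_gt; exact: num_real.
by rewrite -{1}(expRK M) ltr_ln ?posrE ?expR_gt0 //; exact: lt_trans (expR_gt0 M) hx.
Unshelve. all: by end_near.
Qed.

Lemma xlevel (R : realType) (t : nat -> R) (Tx : R -> R) (L a b c : R) :
  0 < a -> (forall K, 0 <= t K) -> (fun K => t K / ln (K%:R : R)) @ \oo --> L ->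
  (\forall x \near +oo, exists K : nat,
      t K <= Tx x <= t K.+1 /\ K%:R * a - c <= ln x <= K%:R * a + b) ->
  (fun x => Tx x / ln (ln x)) @ +oo --> L.
Proof.
move=> a0 t0 hS hT.
have hlo : (fun K : nat => t K / ln (a * K%:R + b)) @ \oo --> L.
  have h : (fun K : nat => t K / ln (K%:R : R) * (ln (1 * K%:R + 0) / ln (a * K%:R + b)))
      @ \oo --> (L * 1 : R).
    by apply: cvgM => //; exact: RL.
  rewrite mulr1 in h; apply: cvg_trans h; apply: near_eq_cvg; near=> K.
  have hK : 1 <= ln (K%:R : R) by near: K; exact: ln_large.
  rewrite mul1r addr0 mulrA divfK // gt_eqF //; exact: lt_le_trans hK.
have hhi : (fun K : nat => t K.+1 / ln (a * K%:R - c)) @ \oo --> L.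
  have h : (fun K : nat => t K.+1 / ln (K.+1%:R : R) * (ln (1 * K%:R + 1) / ln (a * K%:R - c)))
      @ \oo --> (L * 1 : R).
    apply: cvgM; last exact: RL.
    by rewrite (cvg_shiftS (fun K => t K / ln (K%:R : R))).
  rewrite mulr1 in h; apply: cvg_trans h; apply: near_eq_cvg; near=> K.
  have hK1 : 1 <= ln (K%:R : R) by near: K; exact: ln_large.
  have K0 : (0 < K)%N by near: K; exact: nbhs_infty_gt.
  have hK : 1 <= ln (K.+1%:R : R).
    by apply: le_trans hK1 _; rewrite ler_ln ?posrE ?ltr0n // ler_nat.
  rewrite mul1r natr1 mulrA divfK // gt_eqF //; exact: lt_le_trans hK.
apply/cvgrPdist_le => e e0.
have : \forall K \near \oo, (`|L - t K / ln (a * K%:R + b)| <= e /\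
    `|L - t K.+1 / ln (a * K%:R - c)| <= e) /\ 1 < a * K%:R - c.
  near=> K; split; first split.
  - by near: K; move/cvgrPdist_le: hlo => /(_ e e0).
  - by near: K; move/cvgrPdist_le: hhi => /(_ e e0).
  - have : (1 + c) / a < K%:R by near: K; exact: nbhs_infty_gtr.
    by rewrite ltr_pdivrMr // mulrC => h; lra.
move=> [K0 _ HK0].
near=> x.
have [K [/andP[T1 T2] /andP[l1 l2]]] : exists K : nat,
    t K <= Tx x <= t K.+1 /\ K%:R * a - c <= ln x <= K%:R * a + b by near: x.
have lx : K0%:R * a + b < ln x by near: x; exact: ln_large_x.
have KK : (K0 <= K)%N.
  rewrite -(ler_nat R) -(ler_pM2r a0); apply: ltW; lra.
have [[H1 H2] H3] := HK0 K KK.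
have lp1 : 0 < ln (a * K%:R - c) by apply: ln_gt0.
have lxp : 0 < ln x by apply: lt_le_trans (ltr01) _; rewrite mulrC in H3; lra.
have llo : ln (a * K%:R - c) <= ln (ln x).
  have hp : 0 < a * K%:R - c by lra.
  rewrite ler_ln ?posrE //; rewrite mulrC; lra.
have lhi : ln (ln x) <= ln (a * K%:R + b).
  have hp : 0 < a * K%:R + b by rewrite mulrC; lra.
  rewrite ler_ln ?posrE //; rewrite mulrC; lra.
have lp2 : 0 < ln (ln x) by apply: lt_le_trans lp1 llo.
have lp3 : 0 < ln (a * K%:R + b) by apply: lt_le_trans lp2 lhi.
have A1 : t K / ln (a * K%:R + b) <= Tx x / ln (ln x).
  apply: (@le_trans _ _ (t K / ln (ln x))).
    by apply: ler_wpM2l => //; rewrite lef_pV2 ?posrE.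
  by apply: ler_wpM2r => //; rewrite invr_ge0 ltW.
have A2 : Tx x / ln (ln x) <= t K.+1 / ln (a * K%:R - c).
  apply: (@le_trans _ _ (t K.+1 / ln (ln x))).
    by apply: ler_wpM2r => //; rewrite invr_ge0 ltW.
  by apply: ler_wpM2l => //; rewrite lef_pV2 ?posrE.
move: H1 H2; rewrite !ler_norml => /andP[h1 h2] /andP[h3 h4].
apply/andP; split; lra.
Unshelve. all: by end_near.
Qed.

Lemma lnle (R : realType) (y : R) : 0 < y -> ln y <= y - 1.
Proof. move=> y0; have := @le_ln1Dx R (y - 1); have -> : 1 + (y - 1) = y by ring. by apply; lra. Qed.

Lemma lnln_bounds (R : realType) (p q : R) : 0 < p -> 0 < q ->
  (q - p) / q <= ln q - ln p <= (q - p) / p.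
Proof.
move=> p0 q0; apply/andP; split.
- have := @lnle R _ (divr_gt0 p0 q0); rewrite ln_div ?posrE //.
  have -> : p / q - 1 = - ((q - p) / q) by field; rewrite gt_eqF.
  lra.
- have := @lnle R _ (divr_gt0 q0 p0); rewrite ln_div ?posrE //.
  have -> : q / p - 1 = (q - p) / p by field; rewrite gt_eqF.
  lra.
Qed.

Lemma fr1 (R : realType) (s P : R) : 1 <= s -> 2 <= P ->
  ln (1 + s^-1) <= ln ((s + 1) * P - 1) - ln (s * P - 1) <= ln (1 + s^-1) + (s * P - 1)^-1.
Proof.
move=> s1 P2.
have u0 : 0 < s * P - 1 by nra.
have v0 : 0 < (s + 1) * P - 1 by nra.
have l0 : 0 < 1 + s^-1 by rewrite ltr_pwDl // invr_ge0; lra.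
have E : ln ((s + 1) * P - 1) - ln (s * P - 1) - ln (1 + s^-1) =
    ln (1 + ((s * P - 1) * (s + 1))^-1).
  rewrite -ln_div ?posrE // -ln_div ?posrE ?divr_gt0 //; congr ln.
  by field; rewrite !gt_eqF //; lra.
have t0 : 0 < ((s * P - 1) * (s + 1))^-1 by rewrite invr_gt0 mulr_gt0 //; lra.
have h1 : 0 <= ln (1 + ((s * P - 1) * (s + 1))^-1) by apply: ln_ge0; lra.
have h2 : ln (1 + ((s * P - 1) * (s + 1))^-1) <= ((s * P - 1) * (s + 1))^-1.
  by apply: le_ln1Dx; lra.
have h3 : ((s * P - 1) * (s + 1))^-1 <= (s * P - 1)^-1.
  rewrite lef_pV2 ?posrE //; last by rewrite mulr_gt0 //; lra.
  by rewrite ler_peMr //; lra.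
apply/andP; split; lra.
Qed.


Lemma KL (R : realType) (a b : R) : 0 < a ->
  (fun k : nat => k%:R / (a * k%:R + b)) @ \oo --> a^-1.
Proof.
move=> a0.
have h : (fun k : nat => (a + b * (k%:R : R)^-1)^-1) @ \oo --> a^-1.
  apply: cvgV; first by rewrite gt_eqF.
  rewrite -[X in _ --> X]addr0; apply: cvgD; first exact: cvg_cst.
  by rewrite -(mulr0 b); apply: cvgMr; exact: invn_cvg0.
apply: cvg_trans h; apply: near_eq_cvg; near=> k.
have k0 : 0 < (k%:R : R) by rewrite ltr0n; near: k; exact: nbhs_infty_gt.
have -> : a + b * (k%:R : R)^-1 = (a * k%:R + b) / k%:R by field; rewrite gt_eqF.
by rewrite invf_div.
Unshelve. all: by end_near.
Qed.


Lemma kc_lim (R : realType) (F g : R -> R) (d C : R) (S B : nat) :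
  (0 < S)%N -> (2 <= B)%N ->
  (g x * ln x @[x --> +oo] --> 0) ->
  (\forall x \near +oo, F x = d * ln (ln x) + C + g x) ->
  (fun k : nat => k%:R * (F ((S.+1 * B ^ k)%:R - 1) - F ((S * B ^ k)%:R - 1)))
    @ \oo --> d * (ln (1 + (S%:R : R)^-1) / ln B%:R).
Proof.
move=> S0 B2 hg hF.
set s : R := S%:R; set lB : R := ln B%:R; set l : R := ln (1 + s^-1).
have s1 : 1 <= s by rewrite /s ler1n.
have B2r : 2 <= (B%:R : R) by rewrite ler_nat.
have lB0 : 0 < lB by rewrite /lB ln_gt0 //; lra.
have l2B : ln 2 <= lB by rewrite /lB ler_ln ?posrE //; lra.
pose u k : R := (S * B ^ k)%:R - 1.
pose v k : R := (S.+1 * B ^ k)%:R - 1.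
have uE k : u k = s * (B%:R) ^+ k - 1 by rewrite /u natrM natrX.
have vE k : v k = (s + 1) * (B%:R) ^+ k - 1 by rewrite /v natrM natrX -natr1.
have Pk k : (0 < k)%N -> 2 <= (B%:R : R) ^+ k.
  move=> k0; apply: le_trans B2r _; rewrite -natrX ler_nat.
  by rewrite -{1}(expn1 B) leq_pexp2l // ltnW.
have P0 k : 0 < (B%:R : R) ^+ k by rewrite exprn_gt0 //; lra.
have ku k : k%:R <= u k.
  have := ltn_expl k (B2 : (1 < B)%N) => hk.
  have : (k.+1 <= S * B ^ k)%N by apply: leq_trans hk _; rewrite leq_pmull.
  by rewrite -(ler_nat R) -natr1 /u => h; lra.
have uv k : u k <= v k by rewrite /u /v lerD2r ler_nat leq_mul2r ltnW ?orbT.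
have hu : u @ \oo --> +oo.
  apply/cvgryPge => A; near=> k; apply: le_trans (ku k).
  by apply: ltW; near: k; exact: nbhs_infty_gtr.
have hv : v @ \oo --> +oo.
  apply/cvgryPge => A; near=> k; apply: le_trans (uv k); apply: le_trans (ku k).
  by apply: ltW; near: k; exact: nbhs_infty_gtr.
have gu : (fun k => g (u k) * ln (u k)) @ \oo --> 0 := cvg_comp _ _ hu hg.
have gv : (fun k => g (v k) * ln (v k)) @ \oo --> 0 := cvg_comp _ _ hv hg.
have lnP k : ln ((B%:R : R) ^+ k) = k%:R * lB by rewrite lnXn ?mulr_natl //; lra.
have Pk2 k : (1 < k)%N -> 4 <= (B%:R : R) ^+ k.
  move=> k1; apply: (@le_trans _ _ ((B%:R : R) ^+ 2)).
    by rewrite expr2; nra.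
  by rewrite ler_eXn2l //; lra.
have bnd k : (1 < k)%N ->
    [/\ 1 < u k, k%:R * lB - ln 2 <= ln (u k), ln (u k) <= k%:R * lB + ln s,
        k%:R * lB <= ln (v k) & ln (v k) <= k%:R * lB + ln (s + 1)].
  move=> k1; have P4 := Pk2 k k1; have P0k := P0 k.
  rewrite uE vE -lnP.
  have u1 : 1 < s * (B%:R : R) ^+ k - 1 by nra.
  have hs0 : 0 < s by lra.
  split => //.
  - have h2 : (0 : R) < 2 by [].
    have hq : 0 < (B%:R : R) ^+ k / 2 by rewrite divr_gt0.
    rewrite -ln_div ?posrE // ler_ln ?posrE //; [nra | lra].
  - have hq : 0 < s * (B%:R : R) ^+ k by rewrite mulr_gt0.
    rewrite addrC -lnM ?posrE // ler_ln ?posrE //; lra.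
  - rewrite ler_ln ?posrE //; nra.
  - have hs1 : 0 < s + 1 by lra.
    have hq : 0 < (s + 1) * (B%:R : R) ^+ k by rewrite mulr_gt0.
    rewrite addrC -lnM ?posrE // ler_ln ?posrE //; nra.
have k2 k : (1 < k)%N -> 2 <= (k%:R : R) by move=> k1; rewrite ler_nat.
have Ru : (fun k => k%:R / ln (u k)) @ \oo --> lB^-1.
  apply: (@squeeze_cvgr _ _ _ _ (fun k => k%:R / (lB * k%:R + ln s))
     (fun k => k%:R / (lB * k%:R - ln 2))); last 2 first.
  - exact: KL.
  - exact: KL.
  near=> k.
  have k1 : (1 < k)%N by near: k; exact: nbhs_infty_gt.
  have [u1 h1 h2 _ _] := bnd k k1; have kk := k2 k k1.
  have lu : 0 < ln (u k) by apply: ln_gt0.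
  have hA : 0 < lB * k%:R - ln 2 by nra.
  have hk : 0 <= (k%:R : R) by [].
  apply/andP; split; apply: ler_wpM2l => //; rewrite lef_pV2 ?posrE //; nra.
have Rv : (fun k => k%:R / ln (v k)) @ \oo --> lB^-1.
  apply: (@squeeze_cvgr _ _ _ _ (fun k => k%:R / (lB * k%:R + ln (s + 1)))
     (fun k => k%:R / (lB * k%:R + 0))); last 2 first.
  - exact: KL.
  - exact: KL.
  near=> k.
  have k1 : (1 < k)%N by near: k; exact: nbhs_infty_gt.
  have [u1 _ _ h1 h2] := bnd k k1; have kk := k2 k k1.
  have hA : 0 < lB * k%:R + 0 by nra.
  have lv : 0 < ln (v k) by nra.
  have hk : 0 <= (k%:R : R) by [].
  apply/andP; split; apply: ler_wpM2l => //; rewrite lef_pV2 ?posrE //; nra.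
have invu : (fun k => (u k)^-1) @ \oo --> 0.
  apply/gtr0_cvgV0 => //; near=> k; apply: lt_le_trans (ku k).
  by rewrite ltr0n; near: k; exact: nbhs_infty_gt.
have T1 : (fun k => k%:R * (ln (ln (v k)) - ln (ln (u k)))) @ \oo --> l * lB^-1.
  apply: (@squeeze_cvgr _ _ _ _ (fun k => l * (k%:R / ln (v k)))
     (fun k => (l + (u k)^-1) * (k%:R / ln (u k)))); last 2 first.
  - exact: cvgMr.
  - have h : (fun k => (l + (u k)^-1) * (k%:R / ln (u k))) @ \oo --> (l + 0) * lB^-1.
      by apply: cvgM => //; apply: cvgD => //; exact: cvg_cst.
    by rewrite addr0 in h.
  near=> k.
  have k1 : (1 < k)%N by near: k; exact: nbhs_infty_gt.
  have [u1 h1 h2 h3 h4] := bnd k k1; have kk := k2 k k1.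
  have lu : 0 < ln (u k) by apply: ln_gt0.
  have lv : 0 < ln (v k) by nra.
  have hk : 0 <= (k%:R : R) by [].
  have F1 := @fr1 R s _ s1 (Pk k (ltnW k1)); rewrite -uE -vE in F1.
  move: F1 => /andP[F1 F2].
  have /andP[G1 G2] := @lnln_bounds R _ _ lu lv.
  set p := ln (u k) in lu h1 h2 G1 G2 F1 F2 *.
  set q := ln (v k) in lv h3 h4 G1 G2 F1 F2 *.
  apply/andP; split.
  - apply: (@le_trans _ _ (k%:R * ((q - p) / q))); last by apply: ler_wpM2l.
    rewrite mulrCA; apply: ler_wpM2l => //; apply: ler_wpM2r => //.
    by rewrite invr_ge0; exact: ltW.
  - apply: (@le_trans _ _ (k%:R * ((q - p) / p))); first by apply: ler_wpM2l.
    rewrite [X in _ <= X]mulrCA; apply: ler_wpM2l => //; apply: ler_wpM2r => //.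
    by rewrite invr_ge0; exact: ltW.
have Gu : (fun k => k%:R * g (u k)) @ \oo --> 0.
  have h : (fun k => g (u k) * ln (u k) * (k%:R / ln (u k))) @ \oo --> 0 * lB^-1.
    exact: cvgM.
  rewrite mul0r in h; apply: cvg_trans h; apply: near_eq_cvg; near=> k.
  have k1 : (1 < k)%N by near: k; exact: nbhs_infty_gt.
  have [u1 _ _ _ _] := bnd k k1.
  have lu : 0 < ln (u k) by apply: ln_gt0.
  by rewrite /=; field; rewrite gt_eqF.
have Gv : (fun k => k%:R * g (v k)) @ \oo --> 0.
  have h : (fun k => g (v k) * ln (v k) * (k%:R / ln (v k))) @ \oo --> 0 * lB^-1.
    exact: cvgM.
  rewrite mul0r in h; apply: cvg_trans h; apply: near_eq_cvg; near=> k.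
  have k1 : (1 < k)%N by near: k; exact: nbhs_infty_gt.
  have [u1 _ _ h3 _] := bnd k k1; have kk := k2 k k1.
  have lv : 0 < ln (v k) by nra.
  by rewrite /=; field; rewrite gt_eqF.
have h : (fun k => d * (k%:R * (ln (ln (v k)) - ln (ln (u k)))) +
    (k%:R * g (v k) - k%:R * g (u k))) @ \oo --> d * (l * lB^-1) + (0 - 0).
  by apply: cvgD; [exact: cvgMr | exact: cvgB].
rewrite subrr addr0 in h; apply: cvg_trans h; apply: near_eq_cvg; near=> k.
have Fu : F (u k) = d * ln (ln (u k)) + C + g (u k) by near: k; exact: hu _ hF.
have Fv : F (v k) = d * ln (ln (v k)) + C + g (v k) by near: k; exact: hv _ hF.
rewrite -[(S.+1 * B ^ k)%:R - 1]/(v k) -[(S * B ^ k)%:R - 1]/(u k) Fu Fv.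
by ring.
Unshelve. all: by end_near.
Qed.


Theorem theorem1p1 (R : realType) (K : fieldExtType rat) (A : set (set K))
  (delta C : R) (b : nat) (s : seq nat) :
  A `<=` primes_of K ->
  0 <= delta ->
  (exists g : R -> R,
      (g x * ln x @[x --> +oo%R] --> 0%R) /\
      \forall x \near (+oo : set_system R),
        recip_norm_sum A x = (delta * ln (ln x) + C + g x)%:E) ->
  (2 <= b)%N ->
  (1 <= size s)%N ->
  all (fun a => a < b)%N s ->
  nth 0%N s 0 != 0%N ->
  has_logdensity (leading_digits_set A b s)
    (delta * (ln (1 + ((digits_value b s)%:R)^-1) / ln b%:R)).
Proof.
move=> _ d0 [g [hg hrec]] b2 s1 sb s0.
have sn : s != [::] by case: s s1 sb s0.
set S := digits_value b s.
have S0 : (0 < S)%N := @value_pos b s b2 sn sb s0.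
pose ar n : R := fine (aB R A n).
have aB0 n : (0 <= aB R A n)%E by apply: esum_ge0 => p _; rewrite lee_fin invr_ge0 ler0n.
have arE n : aB R A n = (ar n)%:E.
  rewrite /ar fineK // ge0_fin_numE //.
  have [M [Mr HM]] := hrec.
  pose x := Num.max (M + 1) n%:R.
  have xM : M < x by rewrite /x lt_max; apply/orP; left; lra.
  have x0 : 0 <= x by rewrite /x le_max; apply/orP; right.
  have := HM x xM; rewrite rns_decomp // -(big_mkord xpredT) => E.
  have nx : (n <= Num.trunc x)%N by rewrite truncn_ge_nat // /x le_max lexx orbT.
  apply: (@le_lt_trans _ _ (\sum_(0 <= m < (Num.trunc x).+1) aB R A m)%E); last by rewrite E ltry.
  apply: (@le_trans _ _ (\sum_(0 <= m < n.+1) aB R A m)%E).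
    by rewrite big_nat_recr //=; apply: lee_paddl => //; apply: sume_ge0.
  by apply: lee_sum_nneg_natr => // m _ _.
have ar0 m : 0 <= ar m by rewrite /ar fine_ge0.
pose f m : R := if prefix s (digits b m) then ar m else 0.
have f0 m : 0 <= f m by rewrite /f; case: ifP.
pose P M : R := \sum_(0 <= m < M) ar m.
pose Fx (x : R) : R := P (Num.trunc x).+1.
pose Tx (x : R) : R := \sum_(0 <= m < (Num.trunc x).+1) f m.
have recA x : 0 <= x -> recip_norm_sum A x = (Fx x)%:E.
  move=> x0; rewrite rns_decomp // -(big_mkord xpredT) /Fx /P -sumEFin.
  by apply: eq_bigr => m _; rewrite arE.
have recL x : 0 <= x -> recip_norm_sum (leading_digits_set A b s) x = (Tx x)%:E.
  move=> x0; rewrite rns_decomp // -(big_mkord xpredT) /Tx -sumEFin.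
  by apply: eq_bigr => m _; rewrite aB_lead /f; case: ifP => // _; rewrite arE.
have hF : \forall x \near +oo, Fx x = delta * ln (ln x) + C + g x.
  near=> x; apply: EFin_inj; rewrite -recA; last by near: x; apply: nbhs_pinfty_ge.
  by near: x.
have FP M : (0 < M)%N -> Fx (M%:R - 1) = P M.
  move=> M0; rewrite /Fx; congr P.
  have -> : M%:R - 1 = (M.-1)%:R :> R by rewrite -[in LHS](prednK M0) -natr1 addrK.
  have -> : Num.trunc ((M.-1)%:R : R) = M.-1 by apply: truncn_def; rewrite lexx /= ltr_nat.
  by rewrite prednK.
pose c k : R := Fx ((S.+1 * b ^ k)%:R - 1) - Fx ((S * b ^ k)%:R - 1).
have b0 : (0 < b)%N by lia.
have bk0 k : (0 < b ^ k)%N by rewrite expn_gt0 b0.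
have a12 k : (S * b ^ k <= S.+1 * b ^ k)%N by rewrite leq_mul2r leqnSn orbT.
have a23 k : (S.+1 * b ^ k <= S * b ^ k.+1)%N.
  by rewrite expnSr; have := bk0 k; nia.
have cE k : c k = \sum_(S * b ^ k <= m < S.+1 * b ^ k) ar m.
  rewrite /c !FP ?muln_gt0 ?S0 ?bk0 // /P (big_cat_nat (leq0n _) (a12 k)) /=.
  by rewrite addrC addrK.
have c0 k : 0 <= c k by rewrite cE; apply: sumr_ge0 => m _.
pose t j : R := \sum_(0 <= m < S * b ^ j) f m.
have tS j : t j.+1 = t j + c j.
  rewrite /t (big_cat_nat (leq0n _) (leq_trans (a12 j) (a23 j))) /=; congr (_ + _).
  rewrite (big_cat_nat (a12 j) (a23 j)) /= cE.
  rewrite [X in _ + X]big1_seq ?addr0.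
    apply: eq_big_nat => m /andP[m1 m2].
    rewrite /f (@prefix_window b s m j b2 sn sb s0) ?m2 //.
    by rewrite m1 /=; apply: leq_trans m2 (a23 j).
  move=> m; rewrite mem_index_iota /= => /andP[m1 m2].
  rewrite /f (@prefix_window b s m j b2 sn sb s0); last first.
    by rewrite (leq_trans (a12 j) m1).
  by rewrite ltnNge m1.
have t0 j : 0 <= t j by apply: sumr_ge0 => m _.
set L' := delta * (ln (1 + (S%:R : R)^-1) / ln b%:R).
have lb0 : 0 < ln (b%:R : R) by apply: ln_gt0; rewrite ltr1n.
have L0 : 0 <= L'.
  apply: mulr_ge0 => //; apply: divr_ge0; last exact: ltW.
  apply: ln_ge0; rewrite lerDl invr_ge0 //.
have kc : (fun k : nat => k%:R * c k) @ \oo --> L' := @kc_lim R Fx g delta C S b S0 b2 hg hF.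
have hs := @stolz R t c L' L0 tS c0 kc.
have smono M1 M2 : (M1 <= M2)%N -> \sum_(0 <= m < M1) f m <= \sum_(0 <= m < M2) f m.
  move=> M12; rewrite (big_cat_nat (leq0n _) M12) /= lerDl.
  by apply: sumr_ge0 => m _.
have lnP k : ln ((b%:R : R) ^+ k) = k%:R * ln b%:R by rewrite lnXn ?mulr_natl // ltr0n.
have hx : (fun x => Tx x / ln (ln x)) @ +oo --> L'.
  apply: (@xlevel R t Tx L' (ln b%:R) (ln S%:R + ln b%:R) (ln 2) lb0 t0 hs).
  near=> x.
  have xS : S%:R <= x by near: x; apply: nbhs_pinfty_ge; exact: num_real.
  have x1 : 1 <= x by apply: le_trans xS; rewrite ler1n.
  have x0 : 0 < x by lra.
  have /andP[N1 N2] := truncn_itv (ltW x0).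
  set N := Num.trunc x in N1 N2.
  have SN : (S <= N.+1)%N.
    by apply: leq_trans (leqnSn _); rewrite /N truncn_ge_nat //; lra.
  have m0 : (0 < N.+1 %/ S)%N by rewrite divn_gt0.
  have := trunc_log_bounds b2 m0.
  set k := trunc_log b (N.+1 %/ S) => /andP[k1 k2].
  have e1 : (S * b ^ k <= N.+1)%N.
    apply: leq_trans (leq_divM N.+1 S); rewrite mulnC leq_mul2r k1 orbT //.
  have e2 : (N.+1 < S * b ^ k.+1)%N by rewrite mulnC -ltn_divLR.
  exists k; split; first by apply/andP; split; [exact: smono e1 | exact: smono (ltnW e2)].
  have Sp : 0 < (S%:R : R) by rewrite ltr0n.
  apply/andP; split.
  - have : ((S * b ^ k)%:R : R) <= 2 * x.
      by apply: le_trans (_ : N.+1%:R <= _); [rewrite ler_nat | rewrite -natr1; lra].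
    rewrite natrM natrX => h.
    have h' : (b%:R : R) ^+ k <= 2 * x.
      apply: le_trans h; rewrite ler_peMl //; first by rewrite ler1n.
    have := h'; rewrite -ler_ln ?posrE ?exprn_gt0 ?ltr0n //; last by lra.
    rewrite lnP lnM ?posrE //; lra.
  - have : x < ((S * b ^ k.+1)%:R : R).
      by apply: lt_trans N2 _; rewrite ltr_nat.
    rewrite natrM natrX => h.
    have := ltW h; rewrite -ler_ln ?posrE ?mulr_gt0 ?exprn_gt0 ?ltr0n //.
    rewrite lnM ?posrE ?exprn_gt0 ?ltr0n // lnP -natr1; lra.
rewrite /has_logdensity /upper_logdens /lower_logdens; split.
- apply: (@esup_cvg R _ (fun x => Tx x / ln (ln x)) L'); last exact: hx.
  near=> x.
  have x0 : 0 <= x by near: x; apply: nbhs_pinfty_ge.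
  by rewrite recL // EFinM.
- apply: (@einf_cvg R _ (fun x => Tx x / ln (ln x)) L'); last exact: hx.
  near=> x.
  have x0 : 0 <= x by near: x; apply: nbhs_pinfty_ge.
  by rewrite recL // EFinM.
Unshelve. all: by end_near.
Qed.
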